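(* Let $d$ be a prime power, $\beta>0$, $0\le\eta\le 1$, and let $\rho^{\mathrm{iso}}_{a|x}(\eta)=\eta\frac1d|\phi^a_x\rangle\langle\phi^a_x|+(1-\eta)\frac{\mathbb{I}}{d^2}$, $a\in\{0,\dots,d-1\}$, $x\in\{0,\dots,d\}$, built from a complete set of $d+1$ mutually unbiased bases of $\mathbb{C}^d$. If $\eta>\Big(\sqrt d+\frac{1}{d+\sqrt d+1}\Big)^{-1}$, then $$\xi_{\max}\big(\{\rho^{\mathrm{iso}}_{a|x}(\eta)\}_{a,x}\big)\ \ge\ \frac{(d+1)\big(1+\eta(d-1)\big)}{d(1+\sqrt d)}\ >\ 1;$$ in particular for $\eta=1$, $\xi_{\max}\ge\frac{d+1}{\sqrt d+1}$.
   Context: A complete set of MUBs: $d+1$ orthonormal bases $\{|\phi^a_x\rangle\}_a$ of $\mathbb{C}^d$ with $|\langle\phi^a_x|\phi^b_y\rangle|=1/\sqrt d$ for $x\ne y$. For an assemblage $\{\rho_{a|x}\}$ (PSD operators $\rho_{a|x}=\operatorname{Tr}_A[(M_{a|x}\otimes\mathbb{I})\rho_{AB}]$) with $p(a|x)=\operatorname{Tr}\rho_{a|x}$ and Hermitian $H_{a|x}$ on $\mathbb{C}^d$, $Q_c(\{\rho_{a|x}\},\{H_{a|x}\})=\frac1n\sum_{a,x}[\operatorname{Tr}(H_{a|x}\rho_{a|x})-\operatorname{Tr}(H_{a|x}\gamma_{a|x})]$ with $\gamma_{a|x}=p(a|x)e^{-\beta H_{a|x}}/\operatorname{Tr}e^{-\beta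 H_{a|x}}$, $n$ the number of inputs. $\mathcal{L}$ is the set of unsteerable assemblages (those with $\rho_{a|x}=\int d\lambda\,p(\lambda)p(a|x,\lambda)\sigma_\lambda$), $\mathcal{L}_\rho=\{\{\sigma_{a|x}\}\in\mathcal{L}:\operatorname{Tr}\sigma_{a|x}=\operatorname{Tr}\rho_{a|x}\ \forall a,x\}$, and $\xi_{\max}(\{\rho_{a|x}\})=\sup_{\{H_{a|x}\}} Q_c(\{\rho_{a|x}\},\{H_{a|x}\})/\max_{\{\sigma_{a|x}\}\in\mathcal{L}_\rho}Q_c(\{\sigma_{a|x}\},\{H_{a|x}\})$, the supremum over Hermitian families with strictly positive denominator. *)

(* Defs.v *)
From mathcomp Require Import all_boot all_order all_algebra.
From mathcomp Require Import complex.
From mathcomp Require Import all_classical all_reals all_analysis.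
Set Implicit Arguments. Unset Strict Implicit. Unset Printing Implicit Defensive.
Import Order.TTheory GRing.Theory Num.Theory numFieldNormedType.Exports.
Local Open Scope ring_scope.
Local Open Scope classical_set_scope.

Section Defs.
Variable R : realType.
Local Notation C := R[i].

Definition rc (x : R) : C := (x%:C)%C.

Definition adjmx m n (A : 'M[C]_(m, n)) : 'M[C]_(n, m) := (map_mx conjc A)^T.

Definition hermitian d (A : 'M[C]_d) : Prop := adjmx A = A.

(* positive semidefinite: Hermitian with <v|A|v> >= 0 for all v
   (in the order of R[i], 0 <= z means z is a nonnegative real) *)
Definition psd d (A : 'M[C]_d) : Prop :=
  hermitian A /\ forall v : 'cV[C]_d, 0 <= (adjmx v *m A *m v) 0 0.

Definition density d (A : 'M[C]_d) : Prop := psd A /\ \tr A = 1.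

Definition exp_partial d (A : 'M[C]_d) (n : nat) : 'M[C]_d :=
  \sum_(k < n) (k`!%:R)^-1 *: A ^+ k.

Definition expmx d (A : 'M[C]_d) : 'M[C]_d :=
  \matrix_(i, j)
    (rc (limn (fun n => complex.Re (exp_partial A n i j)))
     + 'i%C * rc (limn (fun n => complex.Im (exp_partial A n i j)))).

(* assemblages with nx inputs x and na outcomes a on C^d; s x a = rho_{a|x} *)
Definition assemblage nx na d := 'I_nx -> 'I_na -> 'M[C]_d.

Definition prob nx na d (s : assemblage nx na d) x a : R :=
  complex.Re (\tr (s x a)).

Definition gibbs nx na d (beta : R) (s : assemblage nx na d)
    (H : assemblage nx na d) x a : 'M[C]_d :=
  let E := expmx ((- rc beta) *: H x a) in
  (rc (prob s x a) / \tr E) *: E.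

(* Q_c({rho},{H}) = 1/n sum_{a,x} [Tr(H rho) - Tr(H gamma)]  (n = nx inputs).
   The traces are real for Hermitian H and PSD rho; we take real parts. *)
Definition Qc nx na d (beta : R) (s H : assemblage nx na d) : R :=
  (nx%:R)^-1 * \sum_(x < nx) \sum_(a < na)
    (complex.Re (\tr (H x a *m s x a))
     - complex.Re (\tr (H x a *m gibbs beta s H x a))).

Definition unsteerable nx na d (s : assemblage nx na d) : Prop :=
  exists (m : nat) (p : 'I_m -> R) (D : 'I_m -> 'I_nx -> 'I_na -> R)
         (sig : 'I_m -> 'M[C]_d),
    (forall l, 0 <= p l) /\ \sum_(l < m) p l = 1 /\
        (forall l x a, 0 <= D l x a) /\
        (forall l x, \sum_(a < na) D l x a = 1) /\
        (forall l, density (sig l)) /\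
        (forall x a, s x a = \sum_(l < m) rc (p l * D l x a) *: sig l).

Definition Lrho nx na d (s : assemblage nx na d) : set (assemblage nx na d) :=
  [set t | unsteerable t /\ forall x a, \tr (t x a) = \tr (s x a)].

Definition denom nx na d (beta : R) (s H : assemblage nx na d) : \bar R :=
  ereal_sup [set (Qc beta t H)%:E | t in Lrho s].

Definition herm_family nx na d (H : assemblage nx na d) : Prop :=
  forall x a, hermitian (H x a).

Definition xi_max nx na d (beta : R) (s : assemblage nx na d) : \bar R :=
  ereal_sup [set (Qc beta s H / fine (denom beta s H))%:E
            | H in [set H | herm_family H /\ (0 < denom beta s H)%E
                            /\ denom beta s H \is a fin_num]].

(* complete set of d+1 mutually unbiased bases of C^d:
   phi x a = |phi^a_x>, x in {0..d}, a in {0..d-1} *)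
Definition complete_MUB d (phi : 'I_d.+1 -> 'I_d -> 'cV[C]_d) : Prop :=
  (forall x a b, (adjmx (phi x a) *m phi x b) 0 0 = (a == b)%:R) /\
  (forall x y a b, x != y ->
     `|(adjmx (phi x a) *m phi y b) 0 0| = rc (Num.sqrt (d%:R))^-1).

Definition rho_iso d (phi : 'I_d.+1 -> 'I_d -> 'cV[C]_d) (eta : R)
    : assemblage d.+1 d d :=
  fun x a => rc (eta / d%:R) *: (phi x a *m adjmx (phi x a))
             + rc ((1 - eta) / (d%:R ^+ 2)) *: 1%:M.

End Defs.

Definition prime_power (d : nat) : Prop :=
  exists p k : nat, [/\ prime p, (0 < k)%N & d = (p ^ k)%N].

(* Main.v *)
Require Import Defs.
From mathcomp Require Import all_boot all_order all_algebra.
From mathcomp Require Import complex.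
From mathcomp Require Import all_classical all_reals all_analysis.
From mathcomp Require Import ring lra.
Import Order.TTheory GRing.Theory Num.Theory numFieldNormedType.Exports.
Local Open Scope ring_scope.
Set Implicit Arguments. Unset Strict Implicit. Unset Printing Implicit Defensive.

Section Aux.
Variable R : realType.
Local Notation C := R[i].

Lemma adjmxE m n (A : 'M[C]_(m,n)) i j : adjmx A i j = conjc (A j i).
Proof. by rewrite /adjmx !mxE. Qed.

Lemma adjmxM m n p (A : 'M[C]_(m,n)) (B : 'M[C]_(n,p)) :
  adjmx (A *m B) = adjmx B *m adjmx A.
Proof. by rewrite /adjmx map_mxM trmx_mul. Qed.

Lemma adjmxK m n (A : 'M[C]_(m,n)) : adjmx (adjmx A) = A.
Proof. by apply/matrixP => i j; rewrite !adjmxE conjcK. Qed.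

Lemma adjmxD m n (A B : 'M[C]_(m,n)) : adjmx (A + B) = adjmx A + adjmx B.
Proof. by apply/matrixP => i j; rewrite /adjmx !mxE rmorphD. Qed.

Lemma adjmxN m n (A : 'M[C]_(m,n)) : adjmx (- A) = - adjmx A.
Proof. by apply/matrixP => i j; rewrite /adjmx !mxE rmorphN. Qed.

Lemma adjmxB m n (A B : 'M[C]_(m,n)) : adjmx (A - B) = adjmx A - adjmx B.
Proof. by rewrite adjmxD adjmxN. Qed.

Lemma adjmx_sum m n I (r : seq I) (P : pred I) (F : I -> 'M[C]_(m,n)) :
  adjmx (\sum_(i <- r | P i) F i) = \sum_(i <- r | P i) adjmx (F i).
Proof.
by elim/big_rec2: _ => [|i A B _ <-]; [apply/matrixP=> i j; rewrite /adjmx !mxE rmorph0 | rewrite adjmxD].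
Qed.

Lemma adjmxZ m n (c : R) (A : 'M[C]_(m,n)) : adjmx (rc c *: A) = rc c *: adjmx A.
Proof. by apply/matrixP => i j; rewrite /adjmx !mxE rmorphM /rc; congr (_ * _); rewrite /conjc /=; by rewrite oppr0. Qed.

Lemma adjmx1 n : adjmx (1%:M : 'M[C]_n) = 1%:M.
Proof. by apply/matrixP => i j; rewrite /adjmx !mxE eq_sym; case: (j == i); rewrite ?conjc_nat. Qed.

Lemma tr_adjmx n (A : 'M[C]_n) : \tr (adjmx A) = conjc (\tr A).
Proof. rewrite /mxtrace rmorph_sum; apply: eq_bigr => i _; by rewrite adjmxE. Qed.

End Aux.

Lemma realbound (R : realType) (d : nat) (hd : (2 <= d)%N)
  (r D : 'I_d.+1 -> 'I_d -> R) :
  (forall x, \sum_a r x a = 0) ->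
  \sum_x \sum_a r x a ^+ 2 <= 1 - d%:R^-1 ->
  (forall x a, 0 <= D x a) -> (forall x, \sum_a D x a = 1) ->
  \sum_x \sum_a D x a * (r x a + d%:R^-1) <= 1 + Num.sqrt (d%:R : R).
Proof.
move=> hr hR hD0 hD1.
set s := Num.sqrt (d%:R : R).
have dpos : (0 : R) < d%:R by rewrite ltr0n (leq_trans _ hd).
have d2 : (2 : R) <= d%:R by rewrite ler_nat.
have spos : 0 < s by rewrite sqrtr_gt0.
have ss : s * s = d%:R by rewrite -expr2 sqr_sqrtr // ltW.
set k := d%:R^-1.
have kd : k * d%:R = 1 by rewrite mulVf // gt_eqF.
have kpos : 0 < k by rewrite invr_gt0.
have hx : forall x, \sum_a D x a * (r x a + k) <=
   (\sum_a (D x a - k) ^+ 2) / (2 * s) + s / 2 * \sum_a r x a ^+ 2 + k.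
  move=> x.
  have -> : \sum_a D x a * (r x a + k) = \sum_a (D x a - k) * r x a + k.
    have e : forall a, D x a * (r x a + k) = (D x a - k) * r x a + (k * r x a + k * D x a).
      by move=> a; ring.
    rewrite (eq_bigr _ (fun a _ => e a)) big_split /= big_split /=.
    by rewrite -!mulr_sumr hr hD1 mulr0 mulr1 add0r.
  rewrite lerD2r mulr_sumr mulr_suml -big_split /=.
  apply: ler_sum => a _.
  have h2 : 0 <= (D x a - k - s * r x a) ^+ 2 by apply: sqr_ge0.
  have -> : (D x a - k) ^+ 2 / (2 * s) + s / 2 * r x a ^+ 2 =
     ((D x a - k - s * r x a) ^+ 2 + 2 * s * ((D x a - k) * r x a)) / (2 * s).
    by field; rewrite gt_eqF.
  rewrite ler_pdivlMr ?mulr_gt0 //.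
  nra.
have hDx : forall x, \sum_a (D x a - k) ^+ 2 <= 1 - k.
  move=> x.
  have e : forall a, (D x a - k) ^+ 2 = D x a ^+ 2 + (- (2 * k)) * D x a + k * k by move=> a; ring.
  rewrite (eq_bigr _ (fun a _ => e a)) big_split big_split /= -mulr_sumr hD1 sumr_const card_ord.
  have : \sum_a D x a ^+ 2 <= 1.
    rewrite -(hD1 x); apply: ler_sum => a _.
    have Dle : D x a <= 1.
      rewrite -(hD1 x) (bigD1 a) //= lerDl; apply: sumr_ge0 => b _; exact: hD0.
    by rewrite expr2 ler_piMr.
  have : k * k *+ d = k by rewrite -mulr_natr -mulrA kd mulr1.
  move=> -> h; lra.
apply: (le_trans (ler_sum _ (fun x _ => hx x))).
rewrite big_split big_split /= -mulr_sumr -mulr_suml sumr_const card_ord.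
have h1 : \sum_(x < d.+1) \sum_a (D x a - k) ^+ 2 <= d.+1%:R * (1 - k).
  apply: le_trans (ler_sum _ (fun x _ => hDx x)) _.
  by rewrite sumr_const card_ord mulr_natl.
have h1' : (\sum_(x < d.+1) \sum_a (D x a - k) ^+ 2) / (2 * s) <= d.+1%:R * (1 - k) / (2 * s).
  by rewrite ler_pM2r // invr_gt0 mulr_gt0.
have h2 : s / 2 * (\sum_x \sum_a r x a ^+ 2) <= s / 2 * (1 - k).
  by rewrite ler_pM2l // divr_gt0.
set dd := (d%:R : R).
suff : (dd+1) * (1 - k) / (2 * s) + s / 2 * (1 - k) + k * (dd+1) <= 1 + s.
  have e1 : (d.+1%:R : R) = dd + 1 by rewrite -[d.+1]addn1 natrD.
  have e2 : k *+ d.+1 = k * (dd + 1) by rewrite -mulr_natr e1.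
  rewrite e1 in h1'; rewrite e2; lra.
rewrite /k /dd -ss.
have s1 : 1 <= s.
  by rewrite -sqrtr1 ler_sqrt // (le_trans _ d2) // ler1n.
have -> : (s * s + 1) * (1 - (s * s)^-1) / (2 * s) + s / 2 * (1 - (s * s)^-1) + (s * s)^-1 * (s * s + 1)
   = ((s * s + 1) * (s * s - 1) + s * s * (s * s - 1) + 2 * s * (s * s + 1)) / (2 * s * (s * s)).
  field; rewrite ?gt_eqF //.
rewrite ler_pdivrMr; last by rewrite !mulr_gt0.
nra.
Qed.

Section MUB.
Variable R : realType.
Local Notation C := R[i].

Lemma mx11M (A B : 'M[C]_1) : (A *m B) 0 0 = A 0 0 * B 0 0.
Proof. by rewrite mxE big_ord1. Qed.

Lemma tr_outer n (u v : 'cV[C]_n) : \tr (u *m adjmx v) = (adjmx v *m u) 0 0.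
Proof. by rewrite mxtrace_mulC /mxtrace big_ord1. Qed.

Lemma Re_conjM (w : C) : complex.Re (complex.conjc w * w) = complex.Re w ^+ 2 + complex.Im w ^+ 2.
Proof. case: w => a b; rewrite /complex.conjc /=. ring. Qed.

Lemma herm_entry n (A : 'M[C]_n) (i j : 'I_n) : Defs.hermitian A -> A i j = complex.conjc (A j i).
Proof. by move=> hA; rewrite -{1}hA adjmxE. Qed.

Definition f n (A B : 'M[C]_n) : R := complex.Re (\tr (A *m B)).

Lemma fC n (A B : 'M[C]_n) : f A B = f B A.
Proof. by rewrite /f mxtrace_mulC. Qed.

Lemma fDl n (A B D : 'M[C]_n) : f (A + B) D = f A D + f B D.
Proof. by rewrite /f mulmxDl mxtraceD raddfD. Qed.

Lemma fNl n (A D : 'M[C]_n) : f (- A) D = - f A D.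
Proof. by rewrite /f mulNmx !raddfN. Qed.

Lemma fBl n (A B D : 'M[C]_n) : f (A - B) D = f A D - f B D.
Proof. by rewrite fDl fNl. Qed.

Lemma fZl n (c : R) (A D : 'M[C]_n) : f (rc c *: A) D = c * f A D.
Proof.
rewrite /f -scalemxAl mxtraceZ /rc.
case: (\tr (A *m D)) => a b /=. by rewrite mul0r subr0.
Qed.

Lemma f_suml n I (r : seq I) (Pr : pred I) (F : I -> 'M[C]_n) D :
  f (\sum_(i <- r | Pr i) F i) D = \sum_(i <- r | Pr i) f (F i) D.
Proof.
elim/big_rec2: _ => [|i A B _ <-]; last by rewrite fDl.
by rewrite /f mul0mx mxtrace0.
Qed.

Lemma fDr n (A B D : 'M[C]_n) : f D (A + B) = f D A + f D B.
Proof. by rewrite fC fDl !(fC D). Qed.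
Lemma fBr n (A B D : 'M[C]_n) : f D (A - B) = f D A - f D B.
Proof. by rewrite fC fBl !(fC D). Qed.
Lemma fZr n (c : R) (A D : 'M[C]_n) : f D (rc c *: A) = c * f D A.
Proof. by rewrite fC fZl fC. Qed.
Lemma f_sumr n I (r : seq I) (Pr : pred I) (F : I -> 'M[C]_n) D :
  f D (\sum_(i <- r | Pr i) F i) = \sum_(i <- r | Pr i) f D (F i).
Proof. by rewrite fC f_suml; apply: eq_bigr => i _; rewrite fC. Qed.

Lemma f_ge0 n (Z : 'M[C]_n) : Defs.hermitian Z -> 0 <= f Z Z.
Proof.
move=> hZ; rewrite /f /mxtrace raddf_sum; apply: sumr_ge0 => i _.
rewrite mxE raddf_sum; apply: sumr_ge0 => j _.
rewrite (herm_entry i j hZ) -[X in 0 <= X]/(complex.Re _) Re_conjM.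
by rewrite addr_ge0 // sqr_ge0.
Qed.

End MUB.

Section MUB2.
Variable R : realType.
Local Notation C := R[i].
Variable d : nat.
Variable phi : 'I_d.+1 -> 'I_d -> 'cV[C]_d.
Hypothesis hON : forall x a b, (adjmx (phi x a) *m phi x b) 0 0 = (a == b)%:R.
Hypothesis hMU : forall x y a b, x != y ->
  `|(adjmx (phi x a) *m phi y b) 0 0| = rc (Num.sqrt (d%:R : R))^-1.
Hypothesis hd : (2 <= d)%N.

Definition P x a : 'M[C]_d := phi x a *m adjmx (phi x a).

Lemma P_herm x a : Defs.hermitian (P x a).
Proof. by rewrite /Defs.hermitian /P adjmxM adjmxK. Qed.

Lemma trP x a : \tr (P x a) = 1.
Proof. by rewrite /P tr_outer hON eqxx. Qed.

Lemma inner11 x a y b : adjmx (phi x a) *m phi y b = ((adjmx (phi x a) *m phi y b) 0 0)%:M.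
Proof. by apply/matrixP => i j; rewrite !ord1 [RHS]mxE eqxx mulr1n. Qed.

Lemma PP x a b : P x a *m P x b = (a == b)%:R *: (phi x a *m adjmx (phi x b)).
Proof.
rewrite /P mulmxA -(mulmxA (phi x a)) inner11 hON mul_mx_scalar.
by rewrite -scalemxAl.
Qed.

Lemma fPP x a b : f (P x a) (P x b) = (a == b)%:R.
Proof.
rewrite /f PP mxtraceZ tr_outer hON.
by case: (eqVneq a b) => _; rewrite /= ?mulr1n ?mulr0n ?mulr1 ?mul0r ?subr0.
Qed.

Lemma fPPne x y a b : x != y -> f (P x a) (P y b) = d%:R^-1.
Proof.
move=> xy.
rewrite /f /P mulmxA mxtrace_mulC /mxtrace big_ord1.
rewrite -!mulmxA (mulmxA (adjmx (phi y b))) mx11M.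
have -> : (adjmx (phi y b) *m phi x a) 0 0 = complex.conjc ((adjmx (phi x a) *m phi y b) 0 0).
  by rewrite -adjmxE adjmxM adjmxK.
set z := (adjmx (phi x a) *m phi y b) 0 0.
have hz := hMU a b xy; rewrite -/z normc_def in hz.
rewrite -[X in X = _]/(complex.Re _) Re_conjM.
have dpos : (0 : R) < d%:R by rewrite ltr0n (leq_trans _ hd).
have := hz; rewrite /rc.
move=> /complexI e.
have e2 : Num.sqrt (complex.Re z ^+ 2 + complex.Im z ^+ 2) ^+ 2 = ((Num.sqrt (d%:R:R))^-1) ^+ 2 by rewrite e.
rewrite sqr_sqrtr ?addr_ge0 ?sqr_ge0 // in e2.
by rewrite e2 exprVn sqr_sqrtr // ltW.
Qed.


Lemma Pentry x a (i k : 'I_d) : P x a i k = phi x a i 0 * complex.conjc (phi x a k 0).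
Proof. by rewrite /P mxE big_ord1 adjmxE. Qed.

Lemma sumP x : \sum_a P x a = 1%:M.
Proof.
pose U : 'M[C]_d := \matrix_(i, j) phi x j i 0.
have h1 : adjmx U *m U = 1%:M.
  apply/matrixP => a b; rewrite [RHS]mxE -(hON x) [LHS]mxE [RHS]mxE.
  by apply: eq_bigr => i _; rewrite !adjmxE !mxE.
have h2 := mulmx1C h1.
apply/matrixP => i k; rewrite -h2 summxE mxE.
by apply: eq_bigr => a _; rewrite Pentry adjmxE !mxE.
Qed.

Lemma f1 (A : 'M[C]_d) : f A 1%:M = complex.Re (\tr A).
Proof. by rewrite /f mulmx1. Qed.

Definition q (s : 'M[C]_d) x a := f (P x a) s.

Lemma sumq (s : 'M[C]_d) x : \sum_a q s x a = complex.Re (\tr s).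
Proof. by rewrite /q -f_suml sumP fC f1. Qed.

End MUB2.

Section Dens.
Variable R : realType.
Local Notation C := R[i].
Variable d : nat.

Definition e (i : 'I_d) : 'cV[C]_d := delta_mx i 0.

Lemma adjmxZc m n (c : C) (A : 'M[C]_(m,n)) : adjmx (c *: A) = complex.conjc c *: adjmx A.
Proof. by apply/matrixP => i j; rewrite /adjmx !mxE rmorphM. Qed.

Lemma adj_e i : adjmx (e i) = delta_mx 0 i.
Proof.
apply/matrixP => k l; rewrite adjmxE !mxE !ord1 eqxx andbT andTb.
by rewrite conjc_nat.
Qed.

Lemma quad_e (A : 'M[C]_d) i j : (adjmx (e i) *m A *m e j) 0 0 = A i j.
Proof. by rewrite adj_e -rowE /e -colE !mxE. Qed.

Lemma quad2 (A : 'M[C]_d) i j (al be : C) :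
  (adjmx (al *: e i + be *: e j) *m A *m (al *: e i + be *: e j)) 0 0 =
  complex.conjc al * al * A i i + complex.conjc al * be * A i j
  + complex.conjc be * al * A j i + complex.conjc be * be * A j j.
Proof.
have qe : forall k l, adjmx (e k) *m A *m e l = (A k l)%:M.
  by move=> k l; apply/matrixP => a b; rewrite !ord1 -quad_e [RHS]mxE mulr1n.
rewrite adjmxD !adjmxZc !(mulmxDl, mulmxDr) -!scalemxAl -!scalemxAr !qe !mxE /=.
ring.
Qed.


Definition Nc (z : C) : R := complex.Re z ^+ 2 + complex.Im z ^+ 2.

Lemma psd_Q (A : 'M[C]_d) (hA : psd A) i j (s t : R) :
  0 <= s ^+ 2 * complex.Re (A i i) - 2 * s * t * Nc (A j i)
       + t ^+ 2 * Nc (A j i) * complex.Re (A j j).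
Proof.
case: hA => hH hq.
have := hq ((s%:C)%C *: e i + (- ((t%:C)%C * A j i)) *: e j).
rewrite quad2 (herm_entry i j hH) lecE => /andP [_].
rewrite /Nc.
move: (A i i) (A j j) (A j i) => [a1 a2] [b1 b2] [c1 c2].
rewrite /complex.conjc /=.
move=> h; lra.
Qed.

Lemma psd_diag (A : 'M[C]_d) (hA : psd A) i : 0 <= complex.Re (A i i).
Proof. have := psd_Q hA i i 1 0; lra. Qed.

Lemma psd_pair (A : 'M[C]_d) (hA : psd A) i j :
  Nc (A j i) <= complex.Re (A i i) * complex.Re (A j j).
Proof.
have hN : Nc (A i j) = Nc (A j i).
  rewrite (herm_entry i j hA.1) /Nc; case: (A j i) => c1 c2 /=; ring.
have Q1 := psd_Q hA i j (complex.Re (A j j)) 1.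
have Q2 := psd_Q hA j i (complex.Re (A i i)) 1.
have Q3 := psd_Q hA i j 1 1.
have a0 := psd_diag hA i. have b0 := psd_diag hA j.
rewrite hN in Q2.
have N0 : 0 <= Nc (A j i) by rewrite /Nc addr_ge0 ?sqr_ge0.
move: Q1 Q2 Q3 a0 b0 N0.
set a := complex.Re (A i i); set b := complex.Re (A j j); set N := Nc (A j i).
move=> Q1 Q2 Q3 a0 b0 N0.
case: (lerP N (a * b)) => // h.
have hb : b <= 0 by nra.
have ha : a <= 0 by nra.
have ea : a = 0 by apply/eqP; rewrite eq_le ha a0.
have eb : b = 0 by apply/eqP; rewrite eq_le hb b0.
rewrite ea eb in Q3 h; nra.
Qed.


Lemma f_herm_sq (A : 'M[C]_d) : Defs.hermitian A ->
  f A A = \sum_i \sum_j Nc (A j i).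
Proof.
move=> hA; rewrite /f /mxtrace raddf_sum; apply: eq_bigr => i _.
rewrite mxE raddf_sum; apply: eq_bigr => j _.
by rewrite (herm_entry i j hA) -[LHS]/(complex.Re _) Re_conjM.
Qed.

Lemma tr2_le1 (A : 'M[C]_d) : density A -> f A A <= 1.
Proof.
case=> hA htr.
rewrite (f_herm_sq hA.1).
have -> : (1 : R) = (\sum_i complex.Re (A i i)) * (\sum_j complex.Re (A j j)).
  have -> : \sum_i complex.Re (A i i) = complex.Re (\tr A) by rewrite /mxtrace raddf_sum.
  by rewrite htr mulr1.
rewrite mulr_suml; apply: ler_sum => i _; rewrite mulr_sumr; apply: ler_sum => j _.
exact: psd_pair.
Qed.

End Dens.

Section MUB3.
Variable R : realType.
Local Notation C := R[i].
Variable d : nat.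
Variable phi : 'I_d.+1 -> 'I_d -> 'cV[C]_d.
Hypothesis hON : forall x a b, (adjmx (phi x a) *m phi x b) 0 0 = (a == b)%:R.
Hypothesis hMU : forall x y a b, x != y ->
  `|(adjmx (phi x a) *m phi y b) 0 0| = rc (Num.sqrt (d%:R : R))^-1.
Hypothesis hd : (2 <= d)%N.

Local Notation P := (P phi).
Local Notation q := (q phi).

Lemma bessel (s : 'M[C]_d) : density s ->
  \sum_x \sum_a (q s x a - d%:R^-1) ^+ 2 <= 1 - d%:R^-1.
Proof.
move=> hs; have T2 := tr2_le1 hs.
case: hs => [[hH _] htr].
have dpos : (0 : R) < d%:R by rewrite ltr0n (leq_trans _ hd).
set k := d%:R^-1.
have htr' : complex.Re (\tr s) = 1 by have := congr1 (@complex.Re R) htr; apply.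
have kd : k * d%:R = 1 by rewrite mulVf // gt_eqF.
set r := fun x a => q s x a - k.
have sumr x : \sum_a r x a = 0.
  rewrite /r sumrB sumq // htr' sumr_const card_ord -mulr_natr /k mulVf ?gt_eqF //.
  by rewrite subrr.
pose tau := s - rc k *: 1%:M.
pose W := \sum_x \sum_a rc (r x a) *: P x a.
have fP1 x a : f (P x a) 1%:M = 1 by rewrite f1 trP.
have ftP x a : f tau (P x a) = r x a.
  by rewrite /tau fBl fZl fC (fC 1%:M) fP1 mulr1.
have ftW : f tau W = \sum_x \sum_a r x a ^+ 2.
  rewrite /W f_sumr; apply: eq_bigr => x _; rewrite f_sumr; apply: eq_bigr => a _.
  by rewrite fZr ftP expr2.
have fPW x a : f (P x a) W = r x a.
  rewrite /W f_sumr (bigD1 x) //= [X in _ + X]big1 ?addr0.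
    rewrite f_sumr (bigD1 a) //= [X in _ + X]big1 ?addr0.
      by rewrite fZr fPP // eqxx mulr1.
    by move=> b hb; rewrite fZr fPP // eq_sym (negbTE hb) mulr0.
  move=> y hy; rewrite f_sumr.
  have hxy : x != y by rewrite eq_sym.
  under eq_bigr => b _ do rewrite fZr (@fPPne R d phi hMU hd x y a b hxy).
  by rewrite -mulr_suml sumr mul0r.
have fWW : f W W = \sum_x \sum_a r x a ^+ 2.
  rewrite {1}/W f_suml; apply: eq_bigr => x _; rewrite f_suml; apply: eq_bigr => a _.
  by rewrite fZl fPW expr2.
have ftt : f tau tau = f s s - k.
  rewrite /tau !(fBl, fBr) !(fZl, fZr) f1 htr' (fC 1%:M) f1 htr' f1 mxtrace1.
  have Rd : complex.Re (d%:R : C) = d%:R by rewrite raddfMn.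
  rewrite Rd kd; lra.
have hZ : Defs.hermitian (tau - W).
  rewrite /Defs.hermitian /tau /W adjmxB adjmxB adjmxZ adjmx1 hH adjmx_sum.
  congr (_ - _); apply: eq_bigr => x _; rewrite adjmx_sum; apply: eq_bigr => a _.
  by rewrite adjmxZ P_herm.
have := f_ge0 hZ.
have fBB : forall A B : 'M[C]_d, f (A - B) (A - B) = f A A - 2 * f A B + f B B.
  by move=> A B; rewrite !(fBl, fBr) (fC B A); ring.
rewrite fBB ftW fWW ftt.
lra.
Qed.

End MUB3.

Section Exp.
Local Open Scope classical_set_scope.
Variable R : realType.
Local Notation C := R[i].
Variable d : nat.

Lemma rcM (a b : R) : rc (a * b) = rc a * rc b.
Proof. by rewrite /rc rmorphM. Qed.
Lemma rcD (a b : R) : rc (a + b) = rc a + rc b.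
Proof. by rewrite /rc rmorphD. Qed.
Lemma rcN (a : R) : rc (- a) = - rc a.
Proof. by rewrite /rc rmorphN. Qed.
Lemma rc_nat n : rc (n%:R : R) = n%:R.
Proof. by elim: n => [//|n IH]; rewrite -addn1 !natrD rcD IH. Qed.
Lemma rcV (a : R) : rc (a^-1) = (rc a)^-1.
Proof.
have [->|a0] := eqVneq a 0; first by rewrite invr0 /rc invr0.
apply: (@mulIf _ (rc a)); first by apply/eqP => -[]; apply/eqP.
by rewrite -rcM !mulVf //; apply/eqP => -[]; apply/eqP.
Qed.
Lemma rcX (a : R) n : rc (a ^+ n) = (rc a) ^+ n.
Proof. by elim: n => [//|n IH]; rewrite !exprS rcM IH. Qed.

Lemma Re_rcM (e : R) (w : C) : complex.Re (rc e * w) = e * complex.Re w.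
Proof. by case: w => a b; rewrite /rc /=; ring. Qed.
Lemma Im_rcM (e : R) (w : C) : complex.Im (rc e * w) = e * complex.Im w.
Proof. by case: w => a b; rewrite /rc /=; ring. Qed.

Lemma ReD (z w : C) : complex.Re (z + w) = complex.Re z + complex.Re w.
Proof. by case: z; case: w. Qed.
Lemma ImD (z w : C) : complex.Im (z + w) = complex.Im z + complex.Im w.
Proof. by case: z; case: w. Qed.

Lemma expmx_idem (P : 'M[C]_d) (b : R) : P *m P = P ->
  expmx (rc b *: P) = 1%:M - P + rc (expR b) *: P.
Proof.
move=> hP.
have hpow k : (rc b *: P) ^+ k.+1 = rc (b ^+ k.+1) *: P.
  elim: k => [|k IH]; first by rewrite expr1.
  rewrite exprS IH -mulmxE -scalemxAl -scalemxAr hP scalerA -rcM -exprS //.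
have hpart n : exp_partial (rc b *: P) n =
    (0 < n)%:R *: (1%:M - P) + rc (series (exp_coeff b) n) *: P.
  elim: n => [|n IH].
    by rewrite /exp_partial big_ord0 /series /= big_geq // scale0r add0r /rc scale0r.
  rewrite /exp_partial big_ord_recr /= -/(exp_partial _ _) IH.
  rewrite /series /= big_nat_recr //= -/(series _ _) /exp_coeff /=.
  case: n IH => [|n] IH.
    rewrite expr0 /series /= big_geq // add0r expr0 divr1 scale0r add0r.
    rewrite fact0 invr1 scale1r -idmxE /rc scale1r.
    have e0 : (0:R)%:C%C = 0 by []. have e1 : (1:R)%:C%C = 1 by [].
    by rewrite e0 e1 scale0r add0r scale1r subrK.
  rewrite hpow rcD scalerDl addrA -(rc_nat (n.+1)`!) -rcV scalerA -rcM mulrC.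
  by [].
apply/matrixP => i j; rewrite mxE.
set M := 1%:M - P + _.
have eM : M i j = (1%:M - P) i j + rc (expR b) * P i j.
  by rewrite /M mxE [X in _ + X]mxE.
have hRe : (fun n => complex.Re (exp_partial (rc b *: P) n i j)) @ \oo --> complex.Re (M i j).
  rewrite -cvg_shiftS /=.
  have e n : complex.Re (exp_partial (rc b *: P) n.+1 i j) =
     complex.Re ((1%:M - P) i j) + series (exp_coeff b) n.+1 * complex.Re (P i j).
    by rewrite hpart mxE [X in _ + X]mxE [X in X + _]mxE /= mulr1n mul1r ReD Re_rcM.
  rewrite (eq_cvg _ _ e) eM ReD Re_rcM.
  apply: cvgD; first exact: cvg_cst.
  apply: cvgMr_tmp. by rewrite (cvg_shiftS (series (exp_coeff b))); exact: is_cvg_series_exp_coeff.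
have hIm : (fun n => complex.Im (exp_partial (rc b *: P) n i j)) @ \oo --> complex.Im (M i j).
  rewrite -cvg_shiftS /=.
  have e n : complex.Im (exp_partial (rc b *: P) n.+1 i j) =
     complex.Im ((1%:M - P) i j) + series (exp_coeff b) n.+1 * complex.Im (P i j).
    by rewrite hpart mxE [X in _ + X]mxE [X in X + _]mxE /= mulr1n mul1r ImD Im_rcM.
  rewrite (eq_cvg _ _ e) eM ImD Im_rcM.
  apply: cvgD; first exact: cvg_cst.
  apply: cvgMr_tmp. by rewrite (cvg_shiftS (series (exp_coeff b))); exact: is_cvg_series_exp_coeff.
by rewrite (cvg_lim _ hRe) // (cvg_lim _ hIm) // -complexE.
Qed.

End Exp.

Section Main.
Local Open Scope classical_set_scope.
Variable R : realType.
Local Notation C := R[i].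
Variable d : nat.
Variable phi : 'I_d.+1 -> 'I_d -> 'cV[C]_d.
Hypothesis hON : forall x a b, (adjmx (phi x a) *m phi x b) 0 0 = (a == b)%:R.
Hypothesis hMU : forall x y a b, x != y ->
  `|(adjmx (phi x a) *m phi y b) 0 0| = rc (Num.sqrt (d%:R : R))^-1.
Hypothesis hd : (2 <= d)%N.

Local Notation P := (P phi).
Local Notation q := (q phi).

Lemma steer (s : 'M[C]_d) (D : 'I_d.+1 -> 'I_d -> R) : density s ->
  (forall x a, 0 <= D x a) -> (forall x, \sum_a D x a = 1) ->
  \sum_x \sum_a D x a * q s x a <= 1 + Num.sqrt (d%:R : R).
Proof.
move=> hs hD0 hD1.
have htr' : complex.Re (\tr s) = 1 by have := congr1 (@complex.Re R) hs.2; apply.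
set k := (d%:R : R)^-1.
have dpos : (0 : R) < d%:R by rewrite ltr0n (leq_trans _ hd).
have hr x : \sum_a (q s x a - k) = 0.
  rewrite sumrB sumq // htr' sumr_const card_ord -mulr_natr /k mulVf ?gt_eqF //.
  by rewrite subrr.
have hb := bessel hON hMU hd hs.
have := realbound hd hr hb hD0 hD1.
congr (_ <= _); apply: eq_bigr => x _; apply: eq_bigr => a _; by rewrite subrK.
Qed.

Definition S (t : @assemblage R d.+1 d d) : R := \sum_x \sum_a f (P x a) (t x a).

Lemma S_unsteer (t : @assemblage R d.+1 d d) : unsteerable t -> S t <= 1 + Num.sqrt (d%:R : R).
Proof.
case=> m [p [D [sig [hp0 [hp1 [hD0 [hD1 [hsig ht]]]]]]]].
rewrite /S.
have -> : \sum_x \sum_a f (P x a) (t x a) =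
    \sum_l p l * (\sum_x \sum_a D l x a * q (sig l) x a).
  under eq_bigr => x _ do under eq_bigr => a _ do rewrite ht f_sumr.
  under eq_bigr => x _ do rewrite exchange_big.
  rewrite exchange_big /=; apply: eq_bigr => l _.
  rewrite mulr_sumr; apply: eq_bigr => x _.
  rewrite mulr_sumr; apply: eq_bigr => a _.
  by rewrite fZr mulrA.
apply: le_trans (_ : \sum_l p l * (1 + Num.sqrt (d%:R : R)) <= _).
  by apply: ler_sum => l _; apply: ler_wpM2l => //; apply: steer.
by rewrite -mulr_suml hp1 mul1r.
Qed.

End Main.

Section Main2.
Local Open Scope classical_set_scope.
Variable R : realType.
Local Notation C := R[i].
Variable d : nat.
Variable phi : 'I_d.+1 -> 'I_d -> 'cV[C]_d.
Hypothesis hON : forall x a b, (adjmx (phi x a) *m phi x b) 0 0 = (a == b)%:R.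
Hypothesis hd : (2 <= d)%N.
Variable beta eta : R.

Local Notation P := (P phi).
Local Notation k := ((d%:R : R)^-1).

Definition H : @assemblage R d.+1 d d := fun x a => P x a.
Local Notation eps := (expR (- beta)).
Definition g : R := k * eps / (d%:R - 1 + eps).
Definition Kc : R := \sum_(x < d.+1) \sum_(a < d) g.

Lemma dpos : (0 : R) < d%:R.
Proof. by rewrite ltr0n (leq_trans _ hd). Qed.

Lemma PPid x a : P x a *m P x a = P x a.
Proof. by rewrite PP // eqxx scale1r. Qed.

Lemma E_eq x a : expmx ((- rc beta) *: H x a) = 1%:M - P x a + rc eps *: P x a.
Proof. by rewrite -rcN; apply: expmx_idem; apply: PPid. Qed.

Lemma Re_rc (z : R) : complex.Re (rc z) = z.
Proof. by []. Qed.

Lemma trE x a : \tr (expmx ((- rc beta) *: H x a)) = rc (d%:R - 1 + eps).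
Proof.
rewrite E_eq !mxtraceD raddfN /= mxtraceZ mxtrace1 trP // mulr1.
by rewrite !rcD rcN rc_nat.
Qed.

Lemma trPE x a : \tr (P x a *m expmx ((- rc beta) *: H x a)) = rc eps.
Proof.
rewrite E_eq mulmxDr mulmxBr mulmx1 PPid // subrr add0r -scalemxAr PPid //.
by rewrite mxtraceZ trP // mulr1.
Qed.

Lemma gibbs_term (s : @assemblage R d.+1 d d) x a : prob s x a = k ->
  complex.Re (\tr (H x a *m gibbs beta s H x a)) = g.
Proof.
move=> hp; rewrite /gibbs -scalemxAr mxtraceZ trE hp.
rewrite [H x a]/H trPE -rcV -rcM -rcM.
by rewrite /g mulrAC.
Qed.

Lemma Qc_eq (s : @assemblage R d.+1 d d) : (forall x a, prob s x a = k) ->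
  Qc beta s H = (d.+1%:R)^-1 * (S phi s - Kc).
Proof.
move=> hp; rewrite /Qc /S /Kc; congr (_ * _).
rewrite -sumrB; apply: eq_bigr => x _; rewrite -sumrB; apply: eq_bigr => a _.
by rewrite gibbs_term.
Qed.


Local Notation rho := (rho_iso phi eta).

Lemma rho_eq x a : rho x a = rc (eta / d%:R) *: P x a + rc ((1 - eta) / (d%:R ^+ 2)) *: 1%:M.
Proof. by []. Qed.

Lemma tr_rho x a : \tr (rho x a) = rc k.
Proof.
have dp := dpos.
rewrite rho_eq mxtraceD !mxtraceZ trP // mxtrace1 mulr1 -rc_nat -rcM -rcD.
by congr rc; field; rewrite gt_eqF.
Qed.

Lemma prob_rho x a : prob rho x a = k.
Proof. by rewrite /prob tr_rho. Qed.

Lemma S_rho : S phi rho = (d%:R + 1) * (1 + eta * (d%:R - 1)) / d%:R.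
Proof.
have dp := dpos.
rewrite /S.
have e x a : f (P x a) (rho x a) = eta / d%:R + (1 - eta) / (d%:R ^+ 2).
  by rewrite rho_eq fDr !fZr fPP // eqxx f1 trP // mulr1 mulr1.
under eq_bigr => x _ do under eq_bigr => a _ do rewrite e.
rewrite !sumr_const !card_ord -mulrnA -[_ *+ _]mulr_natr natrM -[d.+1]addn1 natrD.
by field; rewrite gt_eqF.
Qed.

Definition sig0 : 'M[C]_d := rc k *: 1%:M.
Definition s0 : @assemblage R d.+1 d d :=
  fun x a => \sum_(l < 1) rc (1 * k) *: sig0.

Lemma density_sig0 : density sig0.
Proof.
have dp := dpos.
split; last first.
  by rewrite /sig0 mxtraceZ mxtrace1 -rc_nat -rcM mulVf ?gt_eqF.
split; first by rewrite /Defs.hermitian /sig0 adjmxZ adjmx1.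
move=> v; rewrite /sig0 -scalemxAr -scalemxAl mulmx1 mxE.
apply: mulr_ge0; first by rewrite /rc ler0c invr_ge0 ltW.
rewrite mxE; apply: sumr_ge0 => i _; rewrite adjmxE mulrC; exact: mulcJ_ge0.
Qed.

Lemma s0_unsteer : unsteerable s0.
Proof.
have dp := dpos.
exists 1%N, (fun _ => 1), (fun _ _ _ => k), (fun _ => sig0).
split; first by [].
split; first by rewrite big_ord1.
split; first by move=> *; rewrite invr_ge0 ltW.
split; first by move=> l x; rewrite sumr_const card_ord -(mulr_natr ((d%:R : R)^-1) d) mulVf ?gt_eqF.
split; first by move=> l; exact: density_sig0.
by [].
Qed.

Lemma s0_Lrho : Lrho rho s0.
Proof.
have dp := dpos.
split; first exact: s0_unsteer.
move=> x a; rewrite tr_rho /s0 big_ord1 /sig0 !mxtraceZ mxtrace1 -rc_nat -!rcM.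
by congr rc; field; rewrite gt_eqF.
Qed.

Lemma S_s0 : S phi s0 = (d%:R + 1) / d%:R.
Proof.
have dp := dpos.
rewrite /S.
have e x a : f (P x a) (s0 x a) = k * k.
  by rewrite /s0 big_ord1 /sig0 !fZr f1 trP // mul1r mulr1.
under eq_bigr => x _ do under eq_bigr => a _ do rewrite e.
rewrite !sumr_const !card_ord -mulrnA -[_ *+ _]mulr_natr natrM -[d.+1]addn1 natrD.
by field; rewrite gt_eqF.
Qed.

Lemma Lrho_prob t : Lrho rho t -> forall x a, prob t x a = k.
Proof. by case=> _ ht x a; rewrite /prob ht tr_rho. Qed.

End Main2.

Lemma c_gt1 (R : realType) (d : nat) (eta : R) : (2 <= d)%N ->
  (Num.sqrt (d%:R : R) + (d%:R + Num.sqrt (d%:R : R) + 1)^-1)^-1 < eta ->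
  1 < ((d%:R + 1) * (1 + eta * (d%:R - 1))) / (d%:R * (1 + Num.sqrt (d%:R : R))).
Proof.
move=> hd hthr.
set s := Num.sqrt (d%:R : R) in hthr *.
have d2 : (2 : R) <= d%:R by rewrite ler_nat.
have dpos : (0 : R) < d%:R by lra.
have spos : 0 < s by rewrite sqrtr_gt0.
have ss : s * s = d%:R by rewrite -expr2 sqr_sqrtr // ltW.
have s1 : 1 < s.
  by rewrite -sqrtr1 ltr_sqrt // (lt_le_trans _ d2) // ltr1n.
rewrite -ss in hthr *.
have hT : (s + (s * s + s + 1)^-1)^-1 = (s * s + s + 1) / ((s * s + 1) * (s + 1)).
  have h1 : s * s + s + 1 != 0 by rewrite gt_eqF //; nra.
  have h2 : s * s + 1 != 0 by rewrite gt_eqF //; nra.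
  have h3 : s + 1 != 0 by rewrite gt_eqF //; nra.
  have h4 : s * (s * s + s + 1) + 1 != 0 by rewrite gt_eqF //; nra.
  have e : s + (s * s + s + 1)^-1 = ((s * s + 1) * (s + 1)) / (s * s + s + 1).
    by field.
  by rewrite e invf_div.
rewrite hT ltr_pdivrMr in hthr; last by nra.
rewrite ltr_pdivlMr; last by nra.
have h0 : 0 < s - 1 by rewrite subr_gt0.
have h1 : 0 < eta * ((s * s + 1) * (s + 1)) - (s * s + s + 1) by rewrite subr_gt0.
have h := mulr_gt0 h0 h1.
nra.
Qed.

Theorem mainTheorem4 (R : realType) (d : nat)
    (phi : 'I_d.+1 -> 'I_d -> 'cV[R[i]]_d) (beta eta : R) :
  prime_power d ->
  complete_MUB phi ->
  0 < beta ->
  0 <= eta <= 1 ->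
  (Num.sqrt (d%:R : R) + (d%:R + Num.sqrt (d%:R : R) + 1)^-1)^-1 < eta ->
  let c : R := ((d%:R + 1) * (1 + eta * (d%:R - 1)))
               / (d%:R * (1 + Num.sqrt (d%:R : R))) in
  (c%:E <= xi_max beta (rho_iso phi eta))%E /\ 1 < c.
Proof.
move=> [p [k [pp k0 hdp]]] [hON hMU] hb heta hthr c.
have hd : (2 <= d)%N.
  rewrite hdp; apply: leq_trans (prime_gt1 pp) _.
  by rewrite -{1}(expn1 p) leq_pexp2l // prime_gt0.
have c1 : 1 < c by apply: c_gt1.
split => //.
set s := Num.sqrt (d%:R : R).
have d2 : (2 : R) <= d%:R by rewrite ler_nat.
have dpos : (0 : R) < d%:R by lra.
have spos : 0 < s by rewrite sqrtr_gt0.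
set U := 1 + s.
set rho := rho_iso phi eta.
set Hm := H phi.
set n := (d.+1%:R : R)^-1.
have npos : 0 < n by rewrite invr_gt0 ltr0n.
set K := Kc d beta.
set eps := expR (- beta).
have e0 : 0 < eps by apply: expR_gt0.
have e1 : eps < 1 by rewrite expR_lt1 oppr_lt0.
have hK : K = (d%:R + 1) * d%:R * g d beta.
  rewrite /K /Kc !sumr_const !card_ord -mulrnA -[_ *+ _]mulr_natr natrM -[d.+1]addn1 natrD.
  ring.
have hg : g d beta = (d%:R)^-1 * eps / (d%:R - 1 + eps) by [].
have dm1 : 0 < d%:R - 1 + eps by lra.
have K0 : 0 <= K.
  by rewrite hK hg !mulr_ge0 ?invr_ge0 ?ltW // addr_ge0 // ltW.
have Klt : K < (d%:R + 1) / d%:R.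
  rewrite hK hg.
  have -> : (d%:R + 1) * d%:R * ((d%:R)^-1 * eps / (d%:R - 1 + eps))
      = (d%:R + 1) * (eps / (d%:R - 1 + eps)) by field; rewrite !gt_eqF.
  rewrite ltr_pM2l; last by lra.
  rewrite ltr_pdivrMr // ltr_pdivlMl //; nra.
have Sr : S phi rho = (d%:R + 1) * (1 + eta * (d%:R - 1)) / d%:R := S_rho hON hd eta.
have hc : c = S phi rho / U.
  by rewrite Sr /c /U invfM mulrA.
have SU : U <= S phi rho.
  have : 1 < S phi rho / U by rewrite -hc.
  have Upos : 0 < U by rewrite /U; lra.
  by rewrite ltr_pdivlMr // mul1r => /ltW.
have QcL t : Lrho rho t -> Qc beta t Hm = n * (S phi t - K).
  move=> ht; exact: (Qc_eq hON beta (Lrho_prob hON hd ht)).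
have ub t : Lrho rho t -> Qc beta t Hm <= n * (U - K).
  move=> ht; rewrite QcL // ler_pM2l // lerD2r.
  exact: (S_unsteer hON hMU hd ht.1).
set Den := denom beta rho Hm.
have Dub : (Den <= (n * (U - K))%:E)%E.
  apply: ge_ereal_sup => _ [t ht <-]; rewrite lee_fin; exact: ub.
have Dlb : ((n * ((d%:R + 1) / d%:R - K))%:E <= Den)%E.
  apply: ereal_sup_ubound; exists (@s0 R d); first exact: (s0_Lrho hON hd eta).
  by rewrite QcL ?(S_s0 hON hd) //; exact: (s0_Lrho hON hd eta).
have Lo : 0 < n * ((d%:R + 1) / d%:R - K) by rewrite mulr_gt0 // subr_gt0.
move: Dub Dlb; case HD : Den => [r| |] Dub Dlb; last 2 first.
- by move: Dub; rewrite leye_eq.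
- by move: Dlb; rewrite leeNy_eq.
rewrite lee_fin in Dub Dlb.
have rpos : 0 < r by apply: lt_le_trans Lo Dlb.
apply: le_trans (_ : (Qc beta rho Hm / r)%:E <= _)%E.
  rewrite lee_fin.
  have QcR : Qc beta rho Hm = n * (S phi rho - K).
    apply: (Qc_eq hON beta) => x a; exact: (prob_rho hON hd eta x a).
  have s1 : 1 <= s by rewrite -sqrtr1 ler_sqrt // ler1n (leq_trans _ hd).
  have dd : (d%:R + 1) / d%:R <= U.
    rewrite /U ler_pdivrMr //; nra.
  have UK : 0 < U - K by rewrite subr_gt0; apply: lt_le_trans Klt dd.
  have Upos : 0 < U by rewrite /U; lra.
  have SK : 0 <= S phi rho - K by lra.
  apply: le_trans (_ : (S phi rho - K) / (U - K) <= _).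
    rewrite hc -subr_ge0.
    have -> : (S phi rho - K) / (U - K) - S phi rho / U = K * (S phi rho - U) / (U * (U - K)).
      by field; rewrite !gt_eqF.
    apply: divr_ge0; first by apply: mulr_ge0 => //; rewrite subr_ge0.
    by apply: mulr_ge0; apply: ltW.
  rewrite QcR.
  have -> : (S phi rho - K) / (U - K) = n * (S phi rho - K) / (n * (U - K)).
    by field; rewrite !gt_eqF.
  apply: ler_wpM2l; first by rewrite mulr_ge0 // ltW.
  by rewrite lef_pV2 // posrE ?mulr_gt0.
apply: ereal_sup_ubound; exists Hm => //.
split; first by move=> x a; exact: P_herm.
by rewrite -/Den HD /= lte_fin.
by rewrite -/Den HD.
Qed.
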